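(* Let $X_1,\dots,X_n$ be i.i.d. copies of a non-negative absolutely continuous random variable $X$. Let $\tau_{1|n}(\mathbf X)=\max\{X_1,\dots,X_n\}$ (parallel system), $(\tau_{1|n}(\mathbf X))_t=(\tau_{1|n}(\mathbf X)-t\mid\tau_{1|n}(\mathbf X)>t)$, and $\tau_{1|n}(\mathbf X_t)$ the lifetime of the parallel system built from $n$ independent used components with lifetimes distributed as $(X_i-t\mid X_i>t)$. Then for any fixed $t\ge0$, $\tau_{1|n}(\mathbf X_t)\underset{b}{\prec}(\tau_{1|n}(\mathbf X))_t$.
   Context: All random variables are non-negative and absolutely continuous with support $[0,\infty)$. For a random variable $W$: density $f_W$, cdf $F_W$, reversed hazard rate $\tilde r_W=f_W/F_W$. $U\underset{b}{\prec}V$ means $\tilde r_U(x)/\tilde r_V(x)$ is decreasing (non-increasing) in $x\ge0$. *)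

(* Defs.v *)
From HB Require Import structures.
From mathcomp Require Import all_boot all_order all_algebra.
From mathcomp Require Import all_classical all_reals all_analysis.
Set Implicit Arguments. Unset Strict Implicit. Unset Printing Implicit Defensive.
Import Order.TTheory GRing.Theory Num.Theory.
Import numFieldNormedType.Exports.
Local Open Scope classical_set_scope.
Local Open Scope ring_scope.

Section defs.
Context {d : measure_display} {T : measurableType d} {R : realType}.
Variable P : probability T R.

Definition Fcdf (W : T -> R) (x : R) : R := fine (P [set w | W w <= x]).

Definition Fres (W : T -> R) (t x : R) : R :=
  fine (P ([set w | W w - t <= x] `&` [set w | t < W w])) /
  fine (P [set w | t < W w]).

Definition abs_cont (W : T -> R) : Prop :=
  exists f : R -> R, (forall y, 0 <= f y) /\ measurable_fun setT f /\
    forall x, ((Fcdf W x)%:E =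
      \int[lebesgue_measure]_(y in `]-oo, x]) (f y)%:E)%E.

Definition support_nonneg_halfline (W : T -> R) : Prop :=
  (forall x, x < 0 -> Fcdf W x = 0) /\
  (forall a b, 0 <= a -> a < b -> Fcdf W a < Fcdf W b).

Definition mutually_indep n (X : 'I_n -> T -> R) : Prop :=
  forall B : 'I_n -> set R, (forall i, measurable (B i)) ->
    fine (P (\bigcap_(i in setT) (X i @^-1` B i))) =
    \prod_(i < n) fine (P (X i @^-1` B i)).

(* parallel system lifetime tau_{1|n} = max of the component lifetimes
   (components are a.s. non-negative, so max with 0 changes nothing a.s.) *)
Definition parallel n (X : 'I_n -> T -> R) : T -> R :=
  fun w => \big[Num.max/0]_(i < n) X i w.

End defs.

Definition rhr {R : realType} (G : R -> R) (x : R) : R := derive1 G x / G x.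

Definition rhr_ratio_order {R : realType} (GU GV : R -> R) : Prop :=
  forall x y : R, 0 < x -> x <= y ->
    derivable GU x 1 -> derivable GV x 1 ->
    derivable GU y 1 -> derivable GV y 1 ->
    0 < derive1 GU x -> 0 < derive1 GV x -> 0 < derive1 GU y -> 0 < derive1 GV y ->
    rhr GU y / rhr GV y <= rhr GU x / rhr GV x.

(* Main.v *)
Require Import Defs.
From HB Require Import structures.
From mathcomp Require Import all_boot all_order all_algebra.
From mathcomp Require Import all_classical all_reals all_analysis.
From mathcomp Require Import ring lra.
Import Order.TTheory GRing.Theory Num.Theory.
Import numFieldNormedType.Exports.
Local Open Scope classical_set_scope.
Local Open Scope ring_scope.

Section M.
Context {R : realType} {d : measure_display} {T : measurableType d} (P : probability T R).

Lemma fineP_ge0 (A : set T) : 0 <= fine (P A).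
Proof. by apply: fine_ge0; exact: measure_ge0. Qed.

Lemma fineP_le1 (A : set T) : measurable A -> fine (P A) <= 1.
Proof.
move=> mA; rewrite -lee_fin fineK ?fin_num_measure//; exact: probability_le1.
Qed.

Lemma fineP_setC (A : set T) : measurable A -> fine (P (~` A)) = 1 - fine (P A).
Proof.
move=> mA; rewrite probability_setC// fineB ?fin_num_measure//.
Qed.

Lemma fineP_D (A B : set T) : measurable A -> measurable B -> B `<=` A ->
  fine (P (A `\` B)) = fine (P A) - fine (P B).
Proof.
move=> mA mB BA; rewrite measureD//; last by rewrite (le_lt_trans (probability_le1 P mA)) ?ltry.
by rewrite setIidr// fineB ?fin_num_measure.
Qed.

Lemma Fcdf_ge0 W x : 0 <= Fcdf P W x.
Proof. exact: fineP_ge0. Qed.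

Lemma Fres_eq (W : T -> R) t x : 0 <= x ->
  measurable [set w | W w <= x + t] -> measurable [set w | W w <= t] ->
  Fres P W t x = (Fcdf P W (x + t) - Fcdf P W t) / (1 - Fcdf P W t).
Proof.
move=> x0 m1 m2; rewrite /Fres /Fcdf.
have -> : [set w | t < W w] = ~` [set w | W w <= t].
  by apply/seteqP; split => w /=; rewrite ltNge => /negP.
rewrite fineP_setC//.
have -> : [set w | W w - t <= x] `&` ~` [set w | W w <= t] =
   [set w | W w <= x + t] `\` [set w | W w <= t].
  by apply/seteqP; split => w /= []; rewrite lerBlDr.
rewrite fineP_D// => w /= /le_trans; apply; by rewrite lerDr.
Qed.
End M.

Section M2.
Context {R : realType} {d : measure_display} {T : measurableType d} (P : probability T R).

Lemma par_set n (Xs : 'I_n -> T -> R) c : 0 <= c ->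
  [set w | parallel Xs w <= c] =
  \bigcap_(i in setT) (Xs i @^-1` [set` `]-oo, c]]).
Proof.
move=> c0; apply/seteqP; split => w /=.
  by move=> /bigmax_leP [_ H] i _ /=; rewrite in_itv /= H.
move=> H; apply/bigmax_leP; split => // i _.
by have := H i I; rewrite /= in_itv.
Qed.

Lemma par_meas n (Xs : 'I_n -> {RV P >-> R}) c : 0 <= c ->
  measurable [set w | parallel (fun i => (Xs i : T -> R)) w <= c].
Proof.
move=> c0; rewrite par_set//; apply: fin_bigcap_measurable; [exact: finite_finset| move=> i _].
by apply: measurable_funPTI; exact: measurable_itv.
Qed.

Lemma Fcdf_preim (W : T -> R) c :
  Fcdf P W c = fine (P (W @^-1` [set` `]-oo, c]])).
Proof.
rewrite /Fcdf; congr (fine (P _)); apply/seteqP; split => w /=; by rewrite in_itv.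
Qed.

Lemma par_cdf n (Xs : 'I_n -> {RV P >-> R}) c : 0 <= c ->
  mutually_indep P (fun i => (Xs i : T -> R)) ->
  Fcdf P (parallel (fun i => (Xs i : T -> R))) c = \prod_(i < n) Fcdf P (Xs i) c.
Proof.
move=> c0 ind; rewrite /Fcdf par_set// (ind (fun _ => [set` `]-oo, c]])).
  by apply: eq_bigr => i _; rewrite -Fcdf_preim.
by move=> i; exact: measurable_itv.
Qed.

Lemma RV_meas (X : {RV P >-> R}) c : measurable [set w | X w <= c].
Proof.
have -> : [set w | X w <= c] = X @^-1` [set` `]-oo, c]].
  by apply/seteqP; split => w /=; rewrite in_itv.
by apply: measurable_funPTI; exact: measurable_itv.
Qed.
End M2.

Section K.
Context {R : realType}.

Lemma cont_eq (f g : R -> R) (x : R) : {for x, continuous f} -> {for x, continuous g} ->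
  (\forall z \near x^', f z = g z) -> f x = g x.
Proof.
move=> cf cg fg.
have hf : f @ x^' --> f x.
  apply: cvg_within_filter. exact: cf.
have hg : g @ x^' --> g x.
  apply: cvg_within_filter. exact: cg.
have hf' : g @ x^' --> f x by exact: (cvg_trans (near_eq_cvg fg) hf).
exact: (cvg_unique _ hf' hg).
Qed.

Lemma sum_lb (v w : R) n : 0 <= v -> 0 <= w ->
  w ^+ n <= \sum_(i < n.+1) v ^+ (n - i) * w ^+ i.
Proof.
move=> v0 w0; rewrite big_ord_recr /= subnn expr0 mul1r lerDr.
by apply: sumr_ge0 => i _; rewrite mulr_ge0// exprn_ge0.
Qed.

Lemma sum_at (v : R) n : \sum_(i < n.+1) v ^+ (n - i) * v ^+ i = n.+1%:R * v ^+ n.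
Proof.
rewrite (eq_bigr (fun=> v ^+ n)) ?sumr_const ?card_ord ?mulr_natl// => i _.
by rewrite -exprD subnK// -ltnS.
Qed.

Lemma sum_cont (f : R -> R) (c : R) n (x : R) : {for x, continuous f} ->
  {for x, continuous (fun z => \sum_(i < n.+1) f z ^+ (n - i) * c ^+ i)}.
Proof.
move=> cf.
pose p : {poly R} := \sum_(i < n.+1) (c ^+ i) *: 'X^(n - i).
have -> : (fun z => \sum_(i < n.+1) f z ^+ (n - i) * c ^+ i) = (horner p) \o f.
  apply/funext => z /=; rewrite /p horner_sum; apply: eq_bigr => i _.
  by rewrite hornerZ hornerXn mulrC.
apply: continuous_comp => //; exact: continuous_horner.
Qed.


Lemma key_deriv (GU GV u : R -> R) (x a m k : R) (n : nat) :
  0 < x -> 0 < m -> a < u x ->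
  (forall z, 0 < z -> a <= u z) ->
  (forall z, 0 < z -> GU z = m * (u z - a) ^+ n.+1) ->
  (forall z, 0 < z -> GV z = k * (u z ^+ n.+1 - a ^+ n.+1)) ->
  derivable GU x 1 -> derivable GV x 1 ->
  derive1 GV x * m * (n.+1%:R * (u x - a) ^+ n) =
  derive1 GU x * k * (n.+1%:R * u x ^+ n).
Proof.
move=> x0 m0 ax au eU eV dU dV.
have [hU [hUe hUc hUx]] := (is_derive1_caratheodory GU x _).1 (derivableP dU).
have [hV [hVe hVc hVx]] := (is_derive1_caratheodory GV x _).1 (derivableP dV).
pose S z := \sum_(i < n.+1) (u z - a) ^+ (n - i) * (u x - a) ^+ i.
pose A z := \sum_(i < n.+1) u z ^+ (n - i) * u x ^+ i.
have eS : forall z, 0 < z -> GU z - GU x = m * (u z - u x) * S z.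
  move=> z z0; rewrite eU// eU// -mulrBr subrXX -mulrA; congr (_ * (_ * _)).
  by rewrite opprB addrA subrK.
have eA : forall z, 0 < z -> GV z - GV x = k * (u z - u x) * A z.
  move=> z z0; rewrite eV// eV// -mulrBr opprB addrA subrK subrXX -mulrA //.
have Sge : forall z, 0 < z -> (u x - a) ^+ n <= S z.
  by move=> z z0; apply: sum_lb; rewrite subr_ge0 ?au// ltW.
have cu : {for x, continuous u}.
  have cGU : {for x, continuous GU}.
    by apply: differentiable_continuous; apply/derivable1_diffP.
  apply/cvgrPdist_le => e e0.
  have c0 : 0 < m * (u x - a) ^+ n by rewrite mulr_gt0// exprn_gt0// subr_gt0.
  have H := (cvgrPdist_le _ _).1 cGU _ (mulr_gt0 e0 c0).
  near=> z.
  have z0 : 0 < z by near: z; exact: lt_nbhsr.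
  have hz : `|GU x - GU z| <= e * (m * (u x - a) ^+ n) by near: z; exact: H.
  rewrite -(ler_pM2r c0); apply: le_trans hz.
  have Sz := Sge z z0.
  have S0 : 0 <= S z by apply: le_trans Sz; rewrite exprn_ge0// subr_ge0 ltW.
  rewrite [X in _ <= X]distrC eS// normrM normrM (ger0_norm (ltW m0)) (ger0_norm S0).
  rewrite distrC mulrCA -mulrA ler_pM2l//; exact: ler_wpM2l.
have cS : {for x, continuous S}.
  apply: sum_cont; apply: (@continuousB _ R) => //; exact: cvg_cst.
have cA : {for x, continuous A} by apply: sum_cont.
rewrite !derive1E -hUx -hVx -(sum_at (u x - a)) -(sum_at (u x)).
have -> : \sum_(i < n.+1) (u x - a) ^+ (n - i) * (u x - a) ^+ i = S x by [].
have -> : \sum_(i < n.+1) u x ^+ (n - i) * u x ^+ i = A x by [].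
apply: (@cont_eq (fun z => hV z * m * S z) (fun z => hU z * k * A z)).
- apply: cvgM => //; apply: cvgM => //; exact: cvg_cst.
- apply: cvgM => //; apply: cvgM => //; exact: cvg_cst.
near=> z.
have z0 : 0 < z by near: z; apply: cvg_within; exact: lt_nbhsr.
have zx : z != x by near: z; exact: nbhs_dnbhs_neq.
have e1 := hVe z; rewrite eA// in e1.
have e2 := hUe z; rewrite eS// in e2.
apply: (mulIf (_ : z - x != 0)); first by rewrite subr_eq0.
have -> : hV z * m * S z * (z - x) = m * S z * (hV z * (z - x)) by ring.
have -> : hU z * k * A z * (z - x) = k * A z * (hU z * (z - x)) by ring.
rewrite -e1 -e2; ring.
Unshelve. all: by end_near.
Qed.

Lemma ratio_formula (DU DV GUx GVx u a m k : R) n :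
  0 < DU -> 0 < DV -> 0 < m -> 0 < k -> 0 <= a -> a < u ->
  GUx = m * (u - a) ^+ n.+1 -> GVx = k * (u ^+ n.+1 - a ^+ n.+1) ->
  DV * m * (n.+1%:R * (u - a) ^+ n) = DU * k * (n.+1%:R * u ^+ n) ->
  (DU / GUx) / (DV / GVx) = \sum_(i < n.+1) (a / u) ^+ i.
Proof.
move=> DU0 DV0 m0 k0 a0 au -> -> eq.
have u0 : 0 < u by apply: le_lt_trans au.
have s0 : 0 < u - a by rewrite subr_gt0.
have N0 : (n.+1%:R : R) != 0 by rewrite pnatr_eq0.
have hDV : DV = DU * k * (n.+1%:R * u ^+ n) / (m * (n.+1%:R * (u - a) ^+ n)).
  rewrite -eq; field; rewrite ?N0 ?mulf_neq0 ?gt_eqF ?expf_neq0 ?gt_eqF ?exprn_gt0 //.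
have -> : DU / (m * (u - a) ^+ n.+1) / (DV / (k * (u ^+ n.+1 - a ^+ n.+1))) =
   (u ^+ n.+1 - a ^+ n.+1) / (u ^+ n * (u - a)).
  rewrite hDV !exprS.
  have U0 : u ^+ n != 0 by rewrite expf_neq0 ?gt_eqF.
  have S0 : (u - a) ^+ n != 0 by rewrite expf_neq0 ?gt_eqF.
  have D0 : u * u ^+ n - a * a ^+ n != 0.
    by rewrite -!exprS subr_eq0 gt_eqF// ltrXn2r// ltW.
  move: U0 S0 D0; set U := u ^+ n; set Sn := (u - a) ^+ n; set An := a ^+ n => U0 S0 D0.
  have N1 : 1 + n%:R != 0 :> R by rewrite addrC natr1.
  field; rewrite U0 S0 D0 N1 !gt_eqF //.
have U0 : u ^+ n != 0 by rewrite expf_neq0 ?gt_eqF.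
rewrite subrXX /=.
have -> : forall X, (u - a) * X / (u ^+ n * (u - a)) = X / u ^+ n.
  by move=> X; field; rewrite U0 gt_eqF.
rewrite mulr_suml.
apply: eq_bigr => i _; rewrite expr_div_n.
have -> : u ^+ n = u ^+ (n - i) * u ^+ i by rewrite -exprD subnK// -ltnS.
field; rewrite ?expf_neq0 ?gt_eqF //.
Qed.

Lemma sum_mono (a u v : R) n : 0 <= a -> 0 < u -> u <= v ->
  \sum_(i < n) (a / v) ^+ i <= \sum_(i < n) (a / u) ^+ i.
Proof.
move=> a0 u0 uv; apply: ler_sum => i _.
have v0 : 0 < v by apply: lt_le_trans uv.
apply: lerXn2r; rewrite ?nnegrE.
- by apply: divr_ge0 => //; exact: ltW.
- by apply: divr_ge0 => //; exact: ltW.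
by apply: ler_wpM2l => //; rewrite lef_pV2 ?posrE.
Qed.
End K.

Theorem corollary5p2 (R : realType)
  (d : measure_display) (T : measurableType d) (P : probability T R)
  (d' : measure_display) (T' : measurableType d') (Q : probability T' R)
  (n : nat) (hn : (0 < n)%N)
  (X : {RV P >-> R}) (Xs : 'I_n -> {RV P >-> R})
  (Ys : 'I_n -> {RV Q >-> R}) (t : R) (ht : 0 <= t) :
  abs_cont P X ->
  support_nonneg_halfline P X ->
  (* X_1, ..., X_n are i.i.d. copies of X *)
  mutually_indep P (fun i => (Xs i : T -> R)) ->
  (forall i, Fcdf P (Xs i) = Fcdf P X) ->
  (* n independent used components, distributed as (X_i - t | X_i > t) *)
  mutually_indep Q (fun i => (Ys i : T' -> R)) ->
  (forall i, Fcdf Q (Ys i) = Fres P X t) ->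
  rhr_ratio_order
    (Fcdf Q (parallel (fun i => (Ys i : T' -> R))))         (* tau(X_t) *)
    (Fres P (parallel (fun i => (Xs i : T -> R))) t).       (* (tau(X))_t *)
Proof.
move=> _ [_ Fsup].
case: n hn Xs Ys => [//|n] _ Xs Ys indX cdfX indY cdfY.
set F := Fcdf P X.
have F1 : forall c, F c <= 1 by move=> c; apply: fineP_le1; exact: RV_meas.
have F0 : forall c, 0 <= F c by move=> c; exact: Fcdf_ge0.
set a := F t.
have a0 : 0 <= a by exact: F0.
have a1 : a < 1 by apply: (lt_le_trans (Fsup t (t + 1) ht _)) => //; rewrite ltrDl.
pose u z := F (z + t).
have au : forall z, 0 < z -> a < u z.
  by move=> z z0; apply: Fsup => //; rewrite ltrDr.
have Fmono : forall p q, 0 <= p -> p <= q -> F p <= F q.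
  move=> p q p0; rewrite le_eqVlt => /predU1P [->//|pq]; exact/ltW/Fsup.
set GU := Fcdf Q (parallel _); set GV := Fres P (parallel _) t.
pose m := ((1 - a) ^+ n.+1)^-1.
pose k := (1 - a ^+ n.+1)^-1.
have m0 : 0 < m by rewrite invr_gt0 exprn_gt0// subr_gt0.
have an1 : a ^+ n.+1 < 1 by rewrite expr_lt1.
have k0 : 0 < k by rewrite invr_gt0 subr_gt0.
have eU : forall z, 0 < z -> GU z = m * (u z - a) ^+ n.+1.
  move=> z z0; rewrite /GU par_cdf ?ltW//.
  rewrite (eq_bigr (fun=> Fres P X t z)); last by move=> i _; rewrite cdfY.
  rewrite prodr_const card_ord Fres_eq ?ltW//; last 2 first.
  - exact: RV_meas.
  - exact: RV_meas.
  by rewrite /m /u /a /F exprMn exprVn mulrC.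
have eV : forall z, 0 < z -> GV z = k * (u z ^+ n.+1 - a ^+ n.+1).
  move=> z z0; rewrite /GV Fres_eq ?ltW//; last 2 first.
  - by apply: par_meas; rewrite addr_ge0// ltW.
  - exact: par_meas.
  have zt : 0 <= z + t by rewrite addr_ge0// ltW.
  rewrite !par_cdf //.
  rewrite (eq_bigr (F1 := fun i => Fcdf P (Xs i) (z + t)) (fun=> F (z + t))); last by move=> i _; rewrite cdfX.
  rewrite (eq_bigr (F1 := fun i => Fcdf P (Xs i) t) (fun=> F t)); last by move=> i _; rewrite cdfX.
  by rewrite !prodr_const !card_ord mulrC.
move=> x y x0 xy dUx dVx dUy dVy pUx pVx pUy pVy.
have y0 : 0 < y by apply: lt_le_trans xy.
have aux : forall z, 0 < z -> a <= u z by move=> z z0; exact/ltW/au.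
rewrite /rhr.
rewrite (ratio_formula _ _ _ _ _ _ _ _ _ pUx pVx m0 k0 a0 (au x x0) (eU x x0) (eV x x0)
  (key_deriv _ _ _ _ _ _ _ _ x0 m0 (au x x0) aux eU eV dUx dVx)).
rewrite (ratio_formula _ _ _ _ _ _ _ _ _ pUy pVy m0 k0 a0 (au y y0) (eU y y0) (eV y y0)
  (key_deriv _ _ _ _ _ _ _ _ y0 m0 (au y y0) aux eU eV dUy dVy)).
apply: sum_mono => //.
- exact: le_lt_trans a0 (au x x0).
- by apply: Fmono; [rewrite addr_ge0 // ltW | rewrite lerD2r].
Qed.
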